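(* Let $k\ge1$, let $(A,t)$ be a $\mathcal{C}_k$-algebra and let $K(A)=\{x\in A: t(x)=x=\nabla x\}$. Then: (a) $K(A)$ is a subalgebra of the $mpM$-algebra $A$ (closed under $\wedge,\vee,\sim,{}^\ast,0,1$); (b) $K(A)$ is a Boolean algebra; (c) if $(S,t_S)$ is a $\mathcal{C}_k$-subalgebra of $(A,t)$, then $K(S)=K(A)\cap S$; (d) for $a\in A$, the principal lattice filter $[a)$ is a $c$-filter if and only if $a\in K(A)$; (e) if $a\in K(A)$, then $D(a)=[a)$.
   Context: A modal pseudocomplemented De Morgan algebra ($mpM$-algebra) is an algebra $\langle A,\wedge,\vee,\sim,{}^\ast,0,1\rangle$ such that $\langle A,\wedge,\vee,\sim,0,1\rangle$ is a De Morgan algebra (bounded distributive lattice with $\sim\sim x=x$, $\sim(x\vee y)=\sim x\wedge\sim y$), $x^\ast$ is the pseudocomplement of $x$, and $x\vee\sim x\le x\vee x^\ast$. Put $\nabla x=\sim(\sim x\wedge x^\ast)$, $\triangle x=\sim\nabla\sim x$. A $\mathcal{C}_k$-algebra ($k\ge1$) is a pair $(A,t)$ with $A$ an $mpM$-algebra and $t$ an $mpM$-automorphism of $A$ with $t^k=\mathrm{id}$. A $c$-filter is a lattice filter $F$ with $x\in F\Rightarrow\triangle x\in F$ and $t(x)\in F$. The cyclic implication is $a\rightharpoondown b=\bigvee_{i=1}^{k}\nabla(\sim t^i(a))\vee b$; a cyclic deductive system is a set $D\ni 1$ such that $x,\,x\rightharpoondown y\in D$ imply $y\in D$; $D(a)$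 is the smallest cyclic deductive system containing $a$. *)

(* Defs.v *)
From HB Require Import structures.
From mathcomp Require Import all_boot all_order.
Set Implicit Arguments. Unset Strict Implicit. Unset Printing Implicit Defensive.
Import Order.TTheory.
Local Open Scope order_scope.

Section MpM.
Context {disp : Order.disp_t} {L : tbDistrLatticeType disp}.
Variables (neg star : L -> L).

Definition deMorgan : Prop :=
  (forall x : L, neg (neg x) = x) /\
  (forall x y : L, neg (x `|` y) = neg x `&` neg y).

Definition pseudocomplement : Prop :=
  forall x y : L, (x `&` y == \bot) = (y <= star x).

Definition mpM_algebra : Prop :=
  [/\ deMorgan, pseudocomplement &
      forall x : L, x `|` neg x <= x `|` star x].

Definition nabla (x : L) : L := neg (neg x `&` star x).
Definition delta (x : L) : L := neg (nabla (neg x)).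

Definition mpM_automorphism (t : L -> L) : Prop :=
  bijective t /\
  (forall x y, t (x `&` y) = t x `&` t y) /\
  (forall x y, t (x `|` y) = t x `|` t y) /\
  (forall x, t (neg x) = neg (t x)) /\
  (forall x, t (star x) = star (t x)) /\
  t \bot = \bot /\ t \top = \top.

Definition Ck_algebra (k : nat) (t : L -> L) : Prop :=
  [/\ (1 <= k)%N, mpM_algebra, mpM_automorphism t &
      forall x, iter k t x = x].

Definition Kset (t : L -> L) (x : L) : Prop := t x = x /\ x = nabla x.

Definition mpM_subalgebra (S : L -> Prop) : Prop :=
  (forall x y, S x -> S y -> S (x `&` y)) /\
  (forall x y, S x -> S y -> S (x `|` y)) /\
  (forall x, S x -> S (neg x)) /\
  (forall x, S x -> S (star x)) /\
  S \bot /\ S \top.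

(* C_k-subalgebra: an mpM-subalgebra closed under t (t_S = restriction of t) *)
Definition Ck_subalgebra (t : L -> L) (S : L -> Prop) : Prop :=
  mpM_subalgebra S /\ (forall x, S x -> S (t x)).

(* K(S) computed inside the subalgebra S (with S's own operations, which are
   the restrictions of those of A) *)
Definition Kset_sub (t : L -> L) (S : L -> Prop) (x : L) : Prop :=
  S x /\ t x = x /\ x = nabla x.

(* the subset P (a subalgebra) is a Boolean algebra: every element has a
   complement inside P *)
Definition boolean_subset (P : L -> Prop) : Prop :=
  forall x, P x -> exists y, P y /\ x `&` y = \bot /\ x `|` y = \top.

Definition lattice_filter (F : L -> Prop) : Prop :=
  [/\ F \top,
      (forall x y, F x -> x <= y -> F y) &
      (forall x y, F x -> F y -> F (x `&` y))].

Definition c_filter (t : L -> L) (F : L -> Prop) : Prop :=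
  [/\ lattice_filter F,
      (forall x, F x -> F (delta x)) &
      (forall x, F x -> F (t x))].

Definition principal_filter (a : L) (x : L) : Prop := a <= x.

Definition cyc_imp (k : nat) (t : L -> L) (a b : L) : L :=
  (\join_(1 <= i < k.+1) nabla (neg (iter i t a))) `|` b.

Definition cyclic_ds (k : nat) (t : L -> L) (D : L -> Prop) : Prop :=
  D \top /\ (forall x y, D x -> D (cyc_imp k t x y) -> D y).

Definition Dgen (k : nat) (t : L -> L) (a : L) (x : L) : Prop :=
  forall D, cyclic_ds k t D -> D a -> D x.

End MpM.

(* Main.v *)
Require Import Defs.
From HB Require Import structures.
From mathcomp Require Import all_boot all_order.
Import Order.TTheory.
Local Open Scope order_scope.

Theorem proposition4p4 (disp : Order.disp_t) (L : tbDistrLatticeType disp)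
    (neg star : L -> L) (k : nat) (t : L -> L) :
  Ck_algebra neg star k t ->
  [/\ mpM_subalgebra neg star (Kset neg star t),
      boolean_subset (Kset neg star t),
      (forall S : L -> Prop, Ck_subalgebra neg star t S ->
         forall x, Kset_sub neg star t S x <-> (Kset neg star t x /\ S x)),
      (forall a : L, c_filter neg star t (principal_filter a) <->
                     Kset neg star t a) &
      (forall a : L, Kset neg star t a ->
         forall x, Dgen neg star k t a x <-> principal_filter a x)].
Proof.
case=> k1 [[negK negU] starP _] [_ [tI [tU [tN [tS [t0 t1]]]]]] tk.
have negI : forall x y, neg (x `&` y) = neg x `|` neg y.
  by move=> x y; rewrite -[x]negK -[y]negK -negU !negK.
have negM : forall x y, x <= y -> neg y <= neg x.
  by move=> x y /join_idPl; rewrite joinC => <-; rewrite negU leIl.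
have negT : neg \top = \bot.
  apply/le_anti; rewrite le0x andbT.
  by have := negU (neg \bot) \top; rewrite joinx1 negK => ->; rewrite leIl.
have negB : neg \bot = \top by rewrite -negT negK.
have starI : forall x, x `&` star x = \bot.
  by move=> x; apply/eqP; rewrite starP.
have starM : forall x y, x <= y -> star y <= star x.
  move=> x y xy; rewrite -starP; apply/eqP/le_anti; rewrite le0x andbT.
  by rewrite -(starI y) leI2.
have nablaE : forall x, nabla neg star x = x `|` neg (star x).
  by move=> x; rewrite /nabla negI negK.
have deltaE : forall x, delta neg star x = x `&` star (neg x).
  by move=> x; rewrite /delta /nabla !negK.
have bot_top : forall x, (x `&` neg x = \bot) <-> (x `|` neg x = \top).
  move=> x; split=> h.
    by rewrite -negB -h negI negK joinC.
  by rewrite -negT -h negU negK meetC.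
have nablaP : forall x, (x = nabla neg star x) <-> (x `|` neg x = \top).
  move=> x; rewrite nablaE; split=> h.
    apply/le_anti; rewrite lex1 /=.
    have h1 : neg x `|` neg (star x) = \top by rewrite -negI starI negB.
    rewrite -h1 joinC; apply: leU2 => //.
    by rewrite {2}h leUr.
  have e : star x = neg x.
    apply/le_anti; apply/andP; split; last by rewrite -starP; apply/eqP/bot_top.
    rewrite -[star x]meetx1 -h meetUr meetC starI join0x leIr //.
  by rewrite e negK joinxx.
have negKs : forall x, x `|` neg x = \top -> neg x `|` neg (neg x) = \top.
  by move=> x h; rewrite negK joinC.
have starN : forall x, x `|` neg x = \top -> star x = neg x.
  move=> x h; apply/le_anti; apply/andP; split; last by rewrite -starP; apply/eqP/bot_top.
  rewrite -[star x]meetx1 -h meetUr meetC starI join0x leIr //.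
have tM : forall x y, x <= y -> t x <= t y.
  by move=> x y /meet_idPl h; apply/meet_idPl; rewrite -tI h.
have iterM : forall n x y, x <= y -> iter n t x <= iter n t y.
  by elim=> [|n IH] x y h //=; apply: tM; apply: IH.
have iterF : forall n a, t a = a -> iter n t a = a.
  by move=> n a ha; elim: n => [|n IH] //=; rewrite IH.
have nablaM : forall x y, x <= y -> nabla neg star x <= nabla neg star y.
  move=> x y h; rewrite !nablaE; apply: leU2 => //; apply: negM; exact: starM.
have nablaG : forall x, x <= nabla neg star x by move=> x; rewrite nablaE leUl.
split.
- rewrite /mpM_subalgebra /Kset.
  split; [|split; [|split; [|split; [|split]]]].
  + move=> x y [tx /nablaP hx] [ty /nablaP hy]; split; first by rewrite tI tx ty.
    apply/nablaP; rewrite negI joinIl.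
    apply/eqP; rewrite eq_le lex1 /= lexI; apply/andP; split.
      by rewrite -hx leU2 // leUl.
    by rewrite -hy leU2 // leUr.
  + move=> x y [tx /nablaP hx] [ty /nablaP hy]; split; first by rewrite tU tx ty.
    apply/nablaP; rewrite negU joinC joinIl.
    apply/eqP; rewrite eq_le lex1 /= lexI; apply/andP; split.
      rewrite -hx leUx; apply/andP; split; [apply: (@le_trans _ _ (x `|` y)); [exact: leUl | exact: leUr] | exact: leUl].
    rewrite -hy leUx; apply/andP; split; [apply: (@le_trans _ _ (x `|` y)); [exact: leUr | exact: leUr] | exact: leUl].
  + move=> x [tx /nablaP hx]; split; first by rewrite tN tx.
    by apply/nablaP; apply: negKs.
  + move=> x [tx /nablaP hx]; rewrite starN //; split; first by rewrite tN tx.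
    by apply/nablaP; apply: negKs.
  + by split => //; apply/nablaP; rewrite negB joinx1.
  + by split => //; apply/nablaP; rewrite join1x.
- move=> x [tx /nablaP hx]; exists (neg x); split; last by split=> //; apply/bot_top.
  by split; [rewrite tN tx | apply/nablaP; apply: negKs].
- by move=> S _ x; rewrite /Kset_sub /Kset; tauto.
- move=> a; split.
  + case=> _ hd ht; split.
      have hn : forall n, a <= iter n t a by elim=> [|n IH] //=; apply: ht.
      apply/le_anti; rewrite (ht a (lexx a)) andbT.
      by have := tM _ _ (hn k.-1); rewrite -iterS prednK // tk.
    apply/nablaP; apply/bot_top.
    have := hd a (lexx a); rewrite /principal_filter deltaE lexI lexx /= -starP => /eqP.
    by rewrite meetC.
  + move=> [ta /nablaP ha]; split.
    * split; rewrite /principal_filter ?lex1 //.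
        by move=> x y; apply: le_trans.
      by move=> x y hx hy; rewrite lexI hx hy.
    * move=> x hx; rewrite /principal_filter deltaE lexI hx /= -starP.
      apply/eqP/le_anti; rewrite le0x andbT.
      have : a `&` neg a = \bot by apply/bot_top.
      by move=> <-; rewrite meetC; apply: leI2 => //; apply: negM.
    * by move=> x hx; rewrite /principal_filter -ta; apply: tM.
- move=> a [ta /nablaP ha] x; split.
  + move=> hD; apply: hD; last exact: lexx.
    split; first exact: lex1.
    move=> y z hy; rewrite /principal_filter /cyc_imp => h.
    have hJ : \join_(1 <= i < k.+1) nabla neg star (neg (iter i t y)) <= neg a.
      apply: (big_ind (fun z => z <= neg a)) => //.
        by move=> u v hu hv; rewrite leUx hu hv.
      move=> i _; have -> : neg a = nabla neg star (neg a).
        by apply/nablaP; apply: negKs.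
      apply: nablaM; apply: negM; rewrite -(iterF i a ta); exact: iterM.
    have h2 : a <= neg a `|` z := le_trans h (leU2 hJ (lexx z)).
    have : a = a `&` z.
      by rewrite -{1}(meet_idPl h2) meetUr (proj2 (bot_top a) ha) join0x.
    by move=> ->; rewrite leIr.
  + move=> hx D [DT Dmp] Da; apply: (Dmp a) => //.
    suff -> : cyc_imp neg star k t a x = \top by [].
    apply/le_anti; rewrite lex1 /= /cyc_imp big_ltn // -ha.
    have : a `|` neg a <= x `|` neg (t a).
      by rewrite ta; apply: leU2.
    move=> h; apply: le_trans h _; rewrite leUx; apply/andP; split; first exact: leUr.
    apply: (@le_trans _ _ (nabla neg star (neg (t a)))); first exact: nablaG.
    by rewrite -joinA leUl.
Qed.
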